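(* Let $n\ge1$ be an integer and $s$ a real parameter. Let $A_n$ be the $n\times n$ matrix with $(A_n)_{i,i}=i$ for $1\le i\le n$, $(A_n)_{i,i-1}=i-1$ for $2\le i\le n$, and all other entries $0$; let $B_n$ be the $n\times n$ matrix with $(B_n)_{i,i}=2i$ for $1\le i\le n$, $(B_n)_{i,i-1}=i-1$ for $2\le i\le n$, $(B_n)_{i,i+1}=-(n-i)$ for $1\le i\le n-1$, and all other entries $0$. Then the characteristic polynomial of $C_n(s):=(n+1)A_n+sB_n$ is $$\chi(C_n(s);z)=\det(zI_n-C_n(s))=\prod_{k=1}^n\big(z-(s+k)(n+1)\big).$$ *)

(* Defs.v *)
(* Matrices are 0-indexed: row/column i : 'I_n corresponds to
   the paper's index i+1. *)
From mathcomp Require Import all_boot all_order all_algebra.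
From mathcomp Require Import reals.
Set Implicit Arguments. Unset Strict Implicit. Unset Printing Implicit Defensive.
Import Order.TTheory GRing.Theory Num.Theory.
Local Open Scope ring_scope.

Definition A_mx (R : ringType) (n : nat) : 'M[R]_n :=
  \matrix_(i < n, j < n)
    (if i == j :> nat then (i.+1)%:R
     else if i == j.+1 :> nat then (j.+1)%:R else 0).

Definition B_mx (R : ringType) (n : nat) : 'M[R]_n :=
  \matrix_(i < n, j < n)
    (if i == j :> nat then (2 * i.+1)%:R
     else if i == j.+1 :> nat then (j.+1)%:R
     else if j == i.+1 :> nat then - (n - i.+1)%:R else 0).

Definition C_mx (R : ringType) (n : nat) (s : R) : 'M[R]_n :=
  (n.+1)%:R *: A_mx R n + s *: B_mx R n.

(* Main.v *)
Require Import Defs.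
From mathcomp Require Import all_boot all_order all_algebra.
From mathcomp Require Import reals.
From mathcomp Require Import zify ring lra.
Import Order.TTheory GRing.Theory Num.Theory.
Local Open Scope ring_scope.

Lemma sum_delta (R : nzRingType) n (G : nat -> R) k :
  \sum_(i < n) (if (i : nat) == k then G i else 0) = if (k < n)%N then G k else 0.
Proof.
elim: n => [|n IH]; first by rewrite big_ord0.
rewrite big_ord_recr /= IH.
have [lt|gt|eq] := ltngtP k n.
- by rewrite addr0 ltnS (ltnW lt).
- by rewrite addr0 ltnNge gt.
- by rewrite eq ltnSn add0r.
Qed.

Lemma sum_deltaS (R : nzRingType) n (G : nat -> R) k :
  \sum_(i < n) (if (i.+1 : nat) == k then G i else 0) =
  if k is k'.+1 then (if (k' < n)%N then G k' else 0) else 0.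
Proof.
case: k => [|k]; first by rewrite big1.
exact: sum_delta.
Qed.

Lemma nat_id2 e d j a b c : (j.+2 * b = d * a -> j.+1 * a = d.+1 * c ->
 2 * j.+2 * a + j.+2 * b + e * (a + c) = (j.+1 + d + e).+2 * a + (d + e).+1 * c)%N.
Proof. intros. nia. Qed.

Definition Pm (R : realType) n : 'M[R]_n := \matrix_(i < n, j < n) ('C(i, j))%:R.
Definition Tm (R : realType) n (s : R) : 'M[R]_n := \matrix_(i < n, j < n)
  (if i == j :> nat then (s + (i.+1)%:R) * (n.+1)%:R
   else if j == i.+1 :> nat then - (s * (n - i.+1)%:R) else 0).

Lemma PC (R : realType) n (s : R) : Pm R n *m @C_mx R n s = Tm R n s *m Pm R n.
Proof.
apply/matrixP => p j; rewrite !mxE.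
pose X1 := fun i : nat => ('C(p, i))%:R * ((n.+1)%:R * (i.+1)%:R + s * (2 * i.+1)%:R) : R.
pose X2 := fun i : nat => ('C(p, i))%:R * ((n.+1)%:R * (j.+1)%:R + s * (j.+1)%:R) : R.
pose X3 := fun i : nat => ('C(p, i))%:R * (s * - (n - i.+1)%:R) : R.
pose Y1 := fun q : nat => (s + (q.+1)%:R) * (n.+1)%:R * ('C(q, j))%:R : R.
pose Y2 := fun q : nat => - (s * (n - p.+1)%:R) * ('C(q, j))%:R : R.
rewrite (eq_bigr (fun i : 'I_n =>
   (if (i : nat) == j then X1 i else 0)
 + (if (i : nat) == j.+1 then X2 i else 0)
 + (if (i.+1 : nat) == j then X3 i else 0))); last first.
  move=> i _; rewrite !mxE /X1 /X2 /X3.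
  repeat (case: eqP => ?); try lia;
  try (match goal with [ H : (nat_of_ord _) = _ |- _ ] => rewrite H end); ring.
rewrite [RHS](eq_bigr (fun q : 'I_n =>
   (if (q : nat) == p then Y1 q else 0)
 + (if (q : nat) == p.+1 then Y2 q else 0))); last first.
  move=> q _; rewrite !mxE /Y1 /Y2.
  repeat (case: eqP => ?); try lia;
  try (match goal with [ H : (nat_of_ord _) = _ |- _ ] => rewrite H end); ring.
rewrite !big_split /= !sum_delta sum_deltaS !ltn_ord.
have -> : (if (j.+1 < n)%N then X2 j.+1 else 0) = X2 j.+1.
  case: ltnP => h //; rewrite /X2 bin_small ?mul0r //.
  exact: leq_trans (ltn_ord p) h.
have -> : (if (p.+1 < n)%N then Y2 p.+1 else 0) = Y2 p.+1.
  case: ltnP => h //; rewrite /Y2.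
  have -> : (n - p.+1)%N = 0%N by lia.
  by rewrite mulr0 oppr0 mul0r.
rewrite /X1 /X2 /X3 /Y1 /Y2.
move: (ltn_ord p) (ltn_ord j); move: (nat_of_ord p) (nat_of_ord j) => {X1 X2 X3 Y1 Y2}{}p {}j hp hj.
have [e En] : exists e, n = (p.+1 + e)%N by exists (n - p.+1)%N; lia.
subst n; rewrite addKn.
case: j hj => [|j] hj.
  rewrite !bin0 bin1; ring.
rewrite binS.
have -> : (j < p.+1 + e)%N by lia.
have [le|lt] := leqP j.+1 p.
  have [d Ed] : exists d, p = (j.+1 + d)%N by exists (p - j.+1)%N; lia.
  have H1 := mul_bin_left p j.+1.
  have H2 := mul_bin_left p j.
  rewrite (_ : (p - j.+1 = d)%N) in H1; last by lia.
  rewrite (_ : (p - j = d.+1)%N) in H2; last by lia.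
  move: H1 H2.
  set a := 'C(p, j.+1); set b := 'C(p, j.+2); set c := 'C(p, j).
  move=> H1 H2.
  have R1 : (j.+2)%:R * (b%:R : R) = d%:R * a%:R by rewrite -!natrM H1.
  have R2 : (j.+1)%:R * (a%:R : R) = (d.+1)%:R * c%:R by rewrite -!natrM H2.
  have -> : (p.+1 + e - j.+1 = (d + e).+1)%N by lia.
  subst p.
  have R1s := congr1 (fun x => s * x) R1.
  have R2s := congr1 (fun x => s * x) R2.
  have R1N := congr1 (fun x => x * (((j.+1 + d).+1 + e).+1)%:R) R1.
  simpl in R1s, R2s, R1N.
  rewrite ?natrD ?natrM in R1 R2 R1s R2s R1N *.
  lra.
rewrite (bin_small lt) (bin_small (ltn_trans lt (ltnSn _))).
have [plt|ple] := ltnP p j.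
  by rewrite (bin_small plt); ring.
have Ej : j = p by lia.
subst j; rewrite binn addKn; ring.
Qed.

Theorem lemmaA2 (R : realType) (n : nat) (s : R) :
  (0 < n)%N ->
  char_poly (@C_mx R n s) =
    \prod_(1 <= k < n.+1) ('X - ((s + k%:R) * (n.+1)%:R)%:P).
Proof.
move=> _.
set P' := map_mx polyC (Pm R n).
have key : P' *m char_poly_mx (@C_mx R n s) = char_poly_mx (Tm R n s) *m P'.
  by rewrite /char_poly_mx mulmxBr mulmxBl -!map_mxM PC scalar_mxC.
have dP : \det P' = 1.
  rewrite det_map_mx det_trig; last first.
    by apply/is_trig_mxP => i j h; rewrite mxE bin_small.
  by rewrite big1 ?rmorph1 // => i _; rewrite mxE binn.
have -> : char_poly (@C_mx R n s) = char_poly (Tm R n s).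
  by rewrite /char_poly -[LHS]mul1r -dP -det_mulmx key det_mulmx dP mulr1.
rewrite /char_poly -det_tr det_trig; last first.
  apply/is_trig_mxP => i j h; rewrite !mxE.
  rewrite (_ : (j == i) = false); last by apply/negbTE; rewrite neq_ltn h orbT.
  have -> : (j == i :> nat) = false by apply/eqP; lia.
  have -> : (i == j.+1 :> nat) = false by apply/eqP; lia.
  by rewrite mulr0n polyC0 subr0.
rewrite big_add1 /= big_mkord; apply: eq_bigr => i _.
by rewrite !mxE !eqxx mulr1n.
Qed.
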